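(* Let $(X,d_X)$ be a geodesic metric space and $F\colon\mathbb{H}^n\to X$ satisfy hypotheses (1)–(4) with constants $\delta,\epsilon,R>0$: (1) each $F\circ\eta_x$ is a geodesic; (2) for distinct $x,x'$, $F\circ\eta_x$ and $F\circ\eta_{x'}$ are two sides of an ideal $\delta$-slim triangle in $X$; (3) $e^{-t}|x-x'|<\epsilon$ implies $d_X(F(x,t),F(x',t))\le R$; (4) $e^{-t_k}|x_k-x_k'|\to\infty$ implies $d_X(F(x_k,t_k),F(x_k',t_k))\to\infty$. Then there exists a constant $C_0=C_0(F)$ such that $t(r)-h_T\le C_0$ for every vertical triangle $T\subset\mathbb{H}^n$, where $r$ is the midpoint of the non-vertical side of $T$.
   Context: Exponential model $\mathbb{H}^n=\mathbb{R}^{n-1}\times\mathbb{R}$, coordinates $(x,t)$, metric $e^{-2t}|dx|^2+dt^2$; $\eta_x(t)=(x,t)$. An ideal $\delta$-slim triangle: three bi-infinite geodesics forming an ideal triangle, each side in the closed $\delta$-neighborhood of the union of the other two. A vertical triangle $T=\mathcal{P}\cup\mathcal{Q}\cup\mathcal{R}$ is an ideal triangle with vertical sides $\mathcal{P}=\eta_x(\mathbb{R})$, $\mathcal{Q}=\eta_{x'}(\mathbb{R})$, $x\ne x'$, and third side $\mathcal{R}$; its midpoint $r$ is the point of $\mathcal{R}$ of maximal $t$-coordinate $t(r)$. With $\Delta=\max\{3\delta,2R/\epsilon+R\}$, the displaced height is $h_T=\min\{t : d_X(F(x,t),F(\mathcal{Q}))\le\Delta\text{ or }d_X(F(\mathcal{P}),F(x',t))\le\Delta\}$,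 a finite number. *)

(* Defs.v *)
From Stdlib Require Import Reals Lra.
Open Scope R_scope.

Definition Rn (m : nat) : Type := {x : nat -> R | forall i, (m <= i)%nat -> x i = 0}.

Fixpoint sumsq (f : nat -> R) (m : nat) : R :=
  match m with
  | O => 0
  | S k => sumsq f k + f k * f k
  end.

Definition euc {m : nat} (x y : Rn m) : R :=
  sqrt (sumsq (fun i => proj1_sig x i - proj1_sig y i) m).

Definition is_metric {X : Type} (d : X -> X -> R) : Prop :=
  (forall p q, 0 <= d p q) /\
  (forall p q, d p q = 0 <-> p = q) /\
  (forall p q, d p q = d q p) /\
  (forall p q r, d p r <= d p q + d q r).

Definition geodesic_space {X : Type} (d : X -> X -> R) : Prop :=
  forall p q : X, exists g : R -> X,
    g 0 = p /\ g (d p q) = q /\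
    forall s u, 0 <= s <= d p q -> 0 <= u <= d p q -> d (g s) (g u) = Rabs (s - u).

Definition geodesic {X : Type} (d : X -> X -> R) (g : R -> X) : Prop :=
  forall s u, d (g s) (g u) = Rabs (s - u).

Definition rev {X : Type} (g : R -> X) : R -> X := fun s => g (- s).

(* the rays s |-> a s and s |-> b s (s >= 0) are at finite Hausdorff distance *)
Definition asymptotic {X : Type} (d : X -> X -> R) (a b : R -> X) : Prop :=
  exists K : R,
    (forall s, 0 <= s -> exists u, 0 <= u /\ d (a s) (b u) <= K) /\
    (forall u, 0 <= u -> exists s, 0 <= s /\ d (a s) (b u) <= K).

(* ideal triangle with sides g1 g2 g3 (each side may be traversed in either
   direction): the forward end of each (oriented) side is asymptotic to the
   backward end of the next one, cyclically. *)
Definition ideal_triangle {X : Type} (d : X -> X -> R) (g1 g2 g3 : R -> X) : Prop :=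
  geodesic d g1 /\ geodesic d g2 /\ geodesic d g3 /\
  exists h1 h2 h3 : R -> X,
    (h1 = g1 \/ h1 = rev g1) /\ (h2 = g2 \/ h2 = rev g2) /\ (h3 = g3 \/ h3 = rev g3) /\
    asymptotic d h1 (rev h2) /\ asymptotic d h2 (rev h3) /\ asymptotic d h3 (rev h1).

(* d(p, A) <= r, for A the image of g : R -> X  (distance = infimum) *)
Definition dist_img_le {X : Type} (d : X -> X -> R) (p : X) (g : R -> X) (r : R) : Prop :=
  forall eta, 0 < eta -> exists u, d p (g u) < r + eta.

Definition dist_img2_le {X : Type} (d : X -> X -> R) (p : X) (g h : R -> X) (r : R) : Prop :=
  forall eta, 0 < eta -> exists u, d p (g u) < r + eta \/ d p (h u) < r + eta.

Definition slim_side {X : Type} (d : X -> X -> R) (delta : R) (g h k : R -> X) : Prop :=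
  forall s, dist_img2_le d (g s) h k delta.

Definition slim_ideal_triangle {X : Type} (d : X -> X -> R) (delta : R)
  (g1 g2 g3 : R -> X) : Prop :=
  ideal_triangle d g1 g2 g3 /\
  slim_side d delta g1 g2 g3 /\ slim_side d delta g2 g1 g3 /\ slim_side d delta g3 g1 g2.

(* points (x, t) with x in R^(n-1), t in R; metric e^{-2t}|dx|^2 + dt^2 *)
Definition Hn (n : nat) : Type := (Rn (n - 1) * R)%type.

Definition arcosh (z : R) : R := ln (z + sqrt (z * z - 1)).

(* Riemannian distance of e^{-2t}|dx|^2+dt^2; with u = e^t this is the upper
   half-space model, whence the classical formula. *)
Definition dH {n : nat} (p q : Hn n) : R :=
  let (x, s) := p in let (y, t) := q in
  arcosh (1 + (euc x y * euc x y + (exp s - exp t) * (exp s - exp t))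
               / (2 * exp s * exp t)).

Definition tcoord {n : nat} (p : Hn n) : R := snd p.

Definition eta {n : nat} (x : Rn (n - 1)) : R -> Hn n := fun t => (x, t).

Definition Delta (delta eps Rc : R) : R := Rmax (3 * delta) (2 * Rc / eps + Rc).

(* the set whose minimum is the displaced height h_T of the vertical
   triangle with vertical sides eta_x, eta_x' *)
Definition height_set {n : nat} {X : Type} (d : X -> X -> R) (F : Hn n -> X)
  (delta eps Rc : R) (x x' : Rn (n - 1)) (t : R) : Prop :=
  dist_img_le d (F (x, t)) (fun u => F (x', u)) (Delta delta eps Rc) \/
  dist_img_le d (F (x', t)) (fun u => F (x, u)) (Delta delta eps Rc).

Definition is_min (S : R -> Prop) (h : R) : Prop := S h /\ forall t, S t -> h <= t.

(* Main.v *)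
Require Import Defs.
From Stdlib Require Import Reals.
From Stdlib Require Import Lia Psatz Lra Classical ClassicalEpsilon FunctionalExtensionality ProofIrrelevance.
Open Scope R_scope.

Lemma exp_le_m a b : a <= b -> exp a <= exp b.
Proof. intros [H|H]; [left; apply exp_increasing; auto | subst; lra]. Qed.

Lemma exp_le_inv a b : exp a <= exp b -> a <= b.
Proof. intros H. destruct (Rle_lt_dec a b) as [h|h]; auto.
  apply exp_increasing in h; lra. Qed.

Lemma sumsq_nonneg f m : 0 <= sumsq f m.
Proof. induction m; simpl; nra. Qed.

Lemma sumsq_zero f m : sumsq f m = 0 -> forall i, (i < m)%nat -> f i = 0.
Proof. induction m; simpl; intros H i Hi. lia.
  pose proof (sumsq_nonneg f m).
  assert (sumsq f m = 0 /\ f m * f m = 0) as [H1 H2] by nra.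
  destruct (Nat.eq_dec i m). subst. nra. apply IHm; auto; lia. Qed.

Lemma sumsq_ext f g m : (forall i, f i = g i) -> sumsq f m = sumsq g m.
Proof. intros H; induction m; simpl; auto. rewrite IHm, H; auto. Qed.

Lemma sumsq_le2 a b m : sumsq (fun i => a i + b i) m <= 2 * (sumsq a m + sumsq b m).
Proof. induction m; simpl. lra. pose proof (Rle_0_sqr (a m - b m)). unfold Rsqr in *. nra. Qed.

Lemma sumsq_le3 a b c m : sumsq (fun i => a i + b i + c i) m <= 3 * (sumsq a m + sumsq b m + sumsq c m).
Proof. induction m; simpl. lra. pose proof (Rle_0_sqr (a m - b m)). pose proof (Rle_0_sqr (a m - c m)). pose proof (Rle_0_sqr (c m - b m)). unfold Rsqr in *. nra. Qed.

Definition sq {m} (y z : Rn m) : R := sumsq (fun i => proj1_sig y i - proj1_sig z i) m.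

Lemma sq_nonneg {m} (y z : Rn m) : 0 <= sq y z.
Proof. apply sumsq_nonneg. Qed.

Lemma sq_sym {m} (y z : Rn m) : sq y z = sq z y.
Proof. unfold sq. induction m; simpl; auto. 
  assert (forall m0 : nat, sumsq (fun i => proj1_sig y i - proj1_sig z i) m0 = sumsq (fun i => proj1_sig z i - proj1_sig y i) m0).
  { induction m0; simpl; auto. rewrite IHm0. ring. }
  rewrite H. ring. Qed.

Lemma sq_tri2 {m} (y z w : Rn m) : sq y w <= 2 * (sq y z + sq z w).
Proof. unfold sq. rewrite (sumsq_ext _ (fun i => (proj1_sig y i - proj1_sig z i) + (proj1_sig z i - proj1_sig w i))).
  apply sumsq_le2. intros; ring. Qed.

Lemma sq_tri3 {m} (y z v w : Rn m) : sq y w <= 3 * (sq y z + sq z v + sq v w).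
Proof. unfold sq. rewrite (sumsq_ext _ (fun i => (proj1_sig y i - proj1_sig z i) + (proj1_sig z i - proj1_sig v i) + (proj1_sig v i - proj1_sig w i))).
  apply sumsq_le3. intros; ring. Qed.

Lemma euc_sq {m} (y z : Rn m) : euc y z = sqrt (sq y z).
Proof. reflexivity. Qed.

Lemma sq_pos {m} (y z : Rn m) : y <> z -> 0 < sq y z.
Proof. intros H. destruct (sq_nonneg y z) as [h|h]; auto. exfalso; apply H.
  destruct y as [y hy], z as [z hz]. 
  assert (y = z). { apply functional_extensionality. intros i.
    destruct (Nat.lt_ge_cases i m) as [hi|hi].
    - pose proof (sumsq_zero _ _ (eq_sym h) i hi). simpl in H0. lra.
    - rewrite hy, hz; auto. }
  subst z. f_equal. apply proof_irrelevance. Qed.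

Definition Aarg {n} (p q : Hn n) : R :=
  1 + (sq (fst p) (fst q) + (exp (snd p) - exp (snd q)) * (exp (snd p) - exp (snd q)))
      / (2 * exp (snd p) * exp (snd q)).

Lemma Aarg_q {n} (p q : Hn n) : exists r, Aarg p q = 1 + r /\ 0 <= r /\
  r * (2 * exp (snd p) * exp (snd q)) = sq (fst p) (fst q) + (exp (snd p) - exp (snd q)) * (exp (snd p) - exp (snd q)).
Proof. pose proof (exp_pos (snd p)); pose proof (exp_pos (snd q)). pose proof (sq_nonneg (fst p) (fst q)).
  exists ((sq (fst p) (fst q) + (exp (snd p) - exp (snd q)) * (exp (snd p) - exp (snd q)))
      / (2 * exp (snd p) * exp (snd q))). split; [reflexivity|split].
  - apply Rmult_le_pos. pose proof (Rle_0_sqr (exp (snd p) - exp (snd q))). unfold Rsqr in *. lra. left; apply Rinv_0_lt_compat; nra.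
  - field; lra. Qed.

Lemma dH_arcosh {n} (p q : Hn n) : dH p q = arcosh (Aarg p q).
Proof. destruct p as [y a], q as [z b]. unfold dH, Aarg. simpl.
  rewrite euc_sq, sqrt_sqrt by apply sq_nonneg. reflexivity. Qed.

Lemma exp_dH {n} (p q : Hn n) : Aarg p q <= exp (dH p q) <= 2 * Aarg p q.
Proof. rewrite dH_arcosh. destruct (Aarg_q p q) as [r [e [h _]]]. rewrite e. unfold arcosh.
  assert (0 <= (1+r)*(1+r) - 1) by (pose proof (Rmult_le_pos r r h h); lra).
  pose proof (sqrt_pos ((1+r)*(1+r) - 1)).
  assert (sqrt ((1+r)*(1+r) - 1) <= 1 + r).
  { apply Rle_trans with (sqrt ((1+r)*(1+r))). apply sqrt_le_1_alt. lra. rewrite sqrt_square; lra. }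
  rewrite exp_ln by lra. lra. Qed.

Lemma dH_sym {n} (p q : Hn n) : dH p q = dH q p.
Proof. rewrite !dH_arcosh. unfold Aarg. rewrite sq_sym. f_equal. f_equal. f_equal. ring. ring. Qed.

Lemma Aarg_ge_l {n} (p q : Hn n) : exp (snd p) / (2 * exp (snd q)) <= Aarg p q.
Proof. destruct (Aarg_q p q) as [r [e [h1 h2]]]. rewrite e.
  pose proof (exp_pos (snd p)); pose proof (exp_pos (snd q)). pose proof (sq_nonneg (fst p) (fst q)).
  set (a := exp (snd p)) in *. set (b := exp (snd q)) in *.
  apply (Rmult_le_reg_r (2 * a * b)). nra.
  replace (a / (2*b) * (2*a*b)) with (a*a) by (field; lra). nra. Qed.

Lemma Aarg_ge_r {n} (p q : Hn n) : exp (snd q) / (2 * exp (snd p)) <= Aarg p q.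
Proof. destruct (Aarg_q p q) as [r [e [h1 h2]]]. rewrite e.
  pose proof (exp_pos (snd p)); pose proof (exp_pos (snd q)). pose proof (sq_nonneg (fst p) (fst q)).
  set (a := exp (snd p)) in *. set (b := exp (snd q)) in *.
  apply (Rmult_le_reg_r (2 * a * b)). nra.
  replace (b / (2*a) * (2*a*b)) with (b*b) by (field; lra). nra. Qed.

Lemma Aarg_ge_sq {n} (p q : Hn n) : sq (fst p) (fst q) / (2 * exp (snd p) * exp (snd q)) <= Aarg p q.
Proof. destruct (Aarg_q p q) as [r [e [h1 h2]]]. rewrite e.
  pose proof (exp_pos (snd p)); pose proof (exp_pos (snd q)). pose proof (sq_nonneg (fst p) (fst q)).
  set (a := exp (snd p)) in *. set (b := exp (snd q)) in *.
  apply (Rmult_le_reg_r (2 * a * b)). nra.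
  replace (sq (fst p) (fst q) / (2*a*b) * (2*a*b)) with (sq (fst p) (fst q)) by (field; lra). nra. Qed.

Lemma end_point {n} (p : Hn n) (x : Rn (n-1)) u K : 0 <= u -> dH p (x, -u) <= K ->
  sq (fst p) x <= 4 * exp K * exp K * (exp (snd p) * exp (snd p)) /\ exp (snd p) <= 2 * exp K.
Proof. intros hu hd.
  destruct (Aarg_q p (x,-u)) as [r [e [hr hq]]]. simpl in hq.
  pose proof (exp_dH p (x,-u)) as [h1 _]. rewrite e in h1.
  assert (exp (dH p (x,-u)) <= exp K) by (apply exp_le_m; auto).
  set (C := exp K) in *. set (a := exp (snd p)) in *. set (b := exp (-u)) in *.
  assert (ha: 0 < a) by apply exp_pos. assert (hb: 0 < b) by apply exp_pos.
  assert (hb1: b <= 1). { unfold b. rewrite <- exp_0. apply exp_le_m. lra. }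
  pose proof (sq_nonneg (fst p) x).
  assert (hr2 : r <= C - 1) by lra.
  assert (hab: 0 < a*b) by nra.
  assert (H3 : sq (fst p) x + a*a + b*b <= 2*C*(a*b)).
  { assert (r * (2*a*b) <= (C-1)*(2*a*b)) by (apply Rmult_le_compat_r; lra). nra. }
  assert (H4: a <= 2*C*b).
  { apply (Rmult_le_reg_l a); auto. nra. }
  assert (H5: b <= 2*C*a).
  { apply (Rmult_le_reg_l b); auto. nra. }
  assert (hC: 0 < C) by apply exp_pos.
  split.
  - assert (2*C*(a*b) <= 2*C*(a*(2*C*a))).
    { apply Rmult_le_compat_l. lra. apply Rmult_le_compat_l; lra. }
    nra.
  - nra.
Qed.

Lemma end_lemma {n} (g : R -> Hn n) (x : Rn (n-1)) K :
  geodesic dH g ->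
  (forall s, 0 <= s -> exists u, 0 <= u /\ dH (g s) (x, -u) <= K) ->
  (forall s, 0 <= s -> sq (fst (g s)) x <= 4 * exp K * exp K * (exp (snd (g s)) * exp (snd (g s)))) /\
  (forall eps, 0 < eps -> exists S0, 0 <= S0 /\ forall s, S0 <= s -> exp (snd (g s)) < eps).
Proof. intros hg hE. split.
  { intros s hs. destruct (hE s hs) as [u [hu hd]]. apply (end_point _ _ _ _ hu hd). }
  intros eps heps.
  set (C := exp K). assert (hC: 0 < C) by apply exp_pos.
  set (y0 := fst (g 0)). set (a0 := exp (snd (g 0))). assert (ha0 : 0 < a0) by apply exp_pos.
  set (N0 := 32*C*C*C*C + 2 * sq x y0 + 8*C*C + 2*a0*a0).
  set (B := 2 + N0 / (eps * a0)).
  pose proof (sq_nonneg x y0).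
  assert (hN0 : 0 <= N0). { unfold N0. pose proof (Rmult_le_pos C C). nra. }
  assert (hB : 0 < B). { unfold B. assert (0 <= N0/(eps*a0)). apply Rmult_le_pos; auto.
     left; apply Rinv_0_lt_compat; nra. lra. }
  exists (Rabs (ln B) + 1). split. pose proof (Rabs_pos (ln B)); lra.
  intros s hs.
  assert (hs0 : 0 <= s) by (pose proof (Rabs_pos (ln B)); lra).
  assert (hsB : B < exp s).
  { rewrite <- (exp_ln B) by auto. apply exp_increasing. pose proof (Rle_abs (ln B)). lra. }
  destruct (Rlt_le_dec (exp (snd (g s))) eps) as [ok|bad]; auto. exfalso.
  destruct (hE s hs0) as [u [hu hd]]. destruct (end_point _ _ _ _ hu hd) as [e1 e2].
  fold C in e1, e2.
  pose proof (hg s 0) as hgs. rewrite Rminus_0_r, Rabs_pos_eq in hgs by auto.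
  pose proof (exp_dH (g s) (g 0)) as [_ h2]. rewrite hgs in h2.
  destruct (Aarg_q (g s) (g 0)) as [r [e [hr hq]]]. rewrite e in h2.
  fold a0 y0 in hq.
  set (a := exp (snd (g s))) in *. assert (ha: 0 < a) by apply exp_pos.
  pose proof (sq_tri2 (fst (g s)) x y0).
  assert (hsq: sq (fst (g s)) y0 + (a - a0)*(a-a0) <= N0).
  { unfold N0. assert (a*a <= 4*C*C) by nra.
    assert (4*C*C*(a*a) <= 4*C*C*(4*C*C)). { apply Rmult_le_compat_l. nra. auto. }
    nra. }
  assert (r * (2*eps*a0) <= N0).
  { apply Rle_trans with (r * (2*a*a0)). apply Rmult_le_compat_l; auto. nra. lra. }
  assert (2 * r <= N0 / (eps*a0)).
  { apply (Rmult_le_reg_r (eps*a0)). nra. replace (N0 / (eps*a0) * (eps*a0)) with N0 by (field; lra). lra. }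
  unfold B in hsB. lra.
Qed.

Lemma geodesic_rev {n} (g : R -> Hn n) : geodesic dH g -> geodesic dH (fun s => g (-s)).
Proof. intros h s u. rewrite h. rewrite <- Rabs_Ropp. f_equal. ring. Qed.

Lemma exp2_gt4 : 4 < exp 2.
Proof. replace 2 with (1+1) by ring. rewrite exp_plus. pose proof (exp_ineq1 1). nra. Qed.

Lemma height_bound {n} (g : R -> Hn n) (x x' : Rn (n-1)) K3 K2 :
  geodesic dH g ->
  (forall s, 0 <= s -> exists u, 0 <= u /\ dH (g s) (x, -u) <= K3) ->
  (forall s, 0 <= s -> exists u, 0 <= u /\ dH (g (-s)) (x', -u) <= K2) ->
  x <> x' -> forall sg, snd (g sg) <= ln (euc x x') + 2.
Proof. intros hg E1 E2 hne sg.
  destruct (end_lemma g x K3 hg E1) as [c1 s1].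
  destruct (end_lemma (fun s => g (-s)) x' K2 (geodesic_rev g hg) E2) as [c2 s2].
  set (c := 4 * exp K3 * exp K3) in *. set (c' := 4 * exp K2 * exp K2) in *.
  assert (hc : 0 < c) by (unfold c; pose proof (exp_pos K3); nra).
  assert (hc' : 0 < c') by (unfold c'; pose proof (exp_pos K2); nra).
  set (D2 := sq x x'). assert (hD : 0 < D2) by (apply sq_pos; auto).
  set (eps := Rmin 1 (D2 / (24 + 12*c + 12*c'))).
  assert (he1 : eps <= 1) by apply Rmin_l.
  assert (he2 : eps <= D2 / (24 + 12*c + 12*c')) by apply Rmin_r.
  assert (hpos : 0 < eps). { apply Rmin_pos. lra. apply Rdiv_lt_0_compat; lra. }
  assert (hepsq : eps * eps * (24 + 12*c + 12*c') <= D2).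
  { apply Rle_trans with (eps * (24 + 12*c + 12*c')).
    apply Rmult_le_compat_r. lra. nra.
    apply (Rmult_le_compat_r (24 + 12*c + 12*c')) in he2. 2: lra.
    replace (D2 / (24 + 12 * c + 12 * c') * (24 + 12 * c + 12 * c')) with D2 in he2 by (field; lra). lra. }
  destruct (s1 eps hpos) as [S0 [hS0 hS]]. destruct (s2 eps hpos) as [S0' [hS0' hS']].
  set (S := Rmax S0 (Rmax sg 0)). set (S' := Rmax S0' (Rmax (-sg) 0)).
  assert (a1 : S0 <= S) by apply Rmax_l.
  assert (a2 : sg <= S) by (unfold S; eapply Rle_trans; [apply Rmax_l|apply Rmax_r]).
  assert (a3 : 0 <= S) by lra.
  assert (b1 : S0' <= S') by apply Rmax_l.
  assert (b2 : -sg <= S') by (unfold S'; eapply Rle_trans; [apply Rmax_l|apply Rmax_r]).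
  assert (b3 : 0 <= S') by lra.
  pose proof (hS S a1) as hal. pose proof (hS' S' b1) as hal'. simpl in hal'.
  pose proof (c1 S a3) as hy1. pose proof (c2 S' b3) as hy2. simpl in hy2.
  set (p := g S) in *. set (q := g (-S')) in *. set (m := g sg).
  set (al := exp (snd p)) in *. set (al' := exp (snd q)) in *.
  assert (hal0 : 0 < al) by apply exp_pos. assert (hal0' : 0 < al') by apply exp_pos.
  assert (dpm : dH p m = S - sg). { unfold p, m. rewrite hg. apply Rabs_pos_eq. lra. }
  assert (dmq : dH m q = sg + S'). { unfold q, m. rewrite hg. replace (sg - - S') with (sg + S') by ring. apply Rabs_pos_eq. lra. }
  assert (dpq : dH p q = dH p m + dH m q). { rewrite dpm, dmq. unfold p, q. rewrite hg. rewrite Rabs_pos_eq; lra. }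
  pose proof (exp_dH p m) as [e1 _]. pose proof (exp_dH m q) as [e2 _]. pose proof (exp_dH p q) as [_ e3].
  pose proof (Aarg_ge_r p m) as f1. pose proof (Aarg_ge_l m q) as f2.
  fold al in f1. fold al' in f2.
  rewrite dpq, exp_plus in e3.
  set (T := exp (snd m)) in *. assert (hT : 0 < T) by apply exp_pos.
  destruct (Aarg_q p q) as [r [e [hr hq]]]. fold al al' in hq. rewrite e in e3.
  assert (Tsq : T/(2*al) * (T/(2*al')) <= 2 * (1 + r)).
  { apply Rle_trans with (exp (dH p m) * exp (dH m q)); auto.
    apply Rmult_le_compat. apply Rmult_le_pos; [lra| left; apply Rinv_0_lt_compat; lra].
    apply Rmult_le_pos; [lra| left; apply Rinv_0_lt_compat; lra]. lra. lra. }
  assert (Tsq2 : T * T <= 8*al*al' + 4*(sq (fst p) (fst q) + (al-al')*(al-al'))).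
  { apply (Rmult_le_compat_r (4*al*al')) in Tsq. 2: nra.
    replace (T / (2 * al) * (T / (2 * al')) * (4 * al * al')) with (T*T) in Tsq by (field; lra).
    nra. }
  pose proof (sq_tri3 (fst p) x x' (fst q)). rewrite (sq_sym x' (fst q)) in H. fold D2 in H.
  assert (al*al <= eps*eps) by nra. assert (al'*al' <= eps*eps) by nra.
  assert (al*al' <= eps*eps) by nra.
  assert ((al-al')*(al-al') <= 4*(eps*eps)) by nra.
  assert (c*(al*al) <= c*(eps*eps)) by (apply Rmult_le_compat_l; lra).
  assert (c'*(al'*al') <= c'*(eps*eps)) by (apply Rmult_le_compat_l; lra).
  assert (HT : T*T <= 13 * D2). { clearbody c c' D2 eps T al al'. assert (24*(eps*eps) + 12*(c*(eps*eps)) + 12*(c'*(eps*eps)) <= D2) by (eapply Rle_trans; [|exact hepsq]; right; ring). assert (8*al*al' = 8*(al*al')) by ring. clear - Tsq2 H H2 H3 H4 H5 H6 H7 hy1 hy2. set (E:=eps*eps) in *. set (u:=al*al') in *. set (v := (al-al')*(al-al')) in *. set (w1 := c*(al*al)) in *. set (w2 := c'*(al'*al')) in *. set (z1 := c*E) in *. set (z2 := c'*E) in *. lra. }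
  unfold euc. fold (sq x x'). fold D2.
  apply exp_le_inv. fold m T. rewrite exp_plus, exp_ln by (apply sqrt_lt_R0; auto).
  set (w := sqrt D2). assert (hw: w*w = D2) by (apply sqrt_sqrt; lra).
  assert (0 < w) by (apply sqrt_lt_R0; auto).
  pose proof exp2_gt4.
  assert (16 <= exp 2 * exp 2) by nra.
  assert (16 * (w*w) <= (exp 2 * exp 2) * (w*w)) by (apply Rmult_le_compat_r; nra).
  assert (T*T <= (w*exp 2)*(w*exp 2)) by nra.
  destruct (Rle_lt_dec T (w * exp 2)) as [ok|bad]; auto. assert (0 < w * exp 2) by (pose proof (exp_pos 2); nra).
  assert (w*exp 2*(w*exp 2) < T*(w*exp 2)) by (apply Rmult_lt_compat_r; lra). assert (T*(w*exp 2) < T*T) by (apply Rmult_lt_compat_l; lra). lra.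
Qed.

Lemma unif {n} {X : Type} (d : X -> X -> R) (F : Hn n -> X)
  (H4 : forall (xk xk' : nat -> Rn (n - 1)) (tk : nat -> R),
          cv_infty (fun k => exp (- tk k) * euc (xk k) (xk' k)) ->
          cv_infty (fun k => d (F (xk k, tk k)) (F (xk' k, tk k)))) (K : R) :
  exists M, 0 < M /\ forall y y' t, M < exp (-t) * euc y y' -> K < d (F (y,t)) (F (y',t)).
Proof.
  apply NNPP; intro hn.
  assert (hk : forall k : nat, exists p : Rn (n-1) * Rn (n-1) * R,
     INR k + 1 < exp (- snd p) * euc (fst (fst p)) (snd (fst p)) /\
     d (F (fst (fst p), snd p)) (F (snd (fst p), snd p)) <= K).
  { intro k. apply NNPP; intro hk. apply hn. exists (INR k + 1). split.
    pose proof (pos_INR k); lra.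
    intros y y' t hp. apply Rnot_le_lt. intro hle. apply hk. exists (y, y', t). simpl. auto. }
  set (f := fun k => proj1_sig (constructive_indefinite_description _ (hk k))).
  assert (hf : forall k, INR k + 1 < exp (- snd (f k)) * euc (fst (fst (f k))) (snd (fst (f k))) /\
     d (F (fst (fst (f k)), snd (f k))) (F (snd (fst (f k)), snd (f k))) <= K).
  { intro k. unfold f. destruct (constructive_indefinite_description _ (hk k)). simpl. auto. }
  assert (hc : cv_infty (fun k => exp (- snd (f k)) * euc (fst (fst (f k))) (snd (fst (f k))))).
  { intro M. destruct (INR_unbounded M) as [N hN]. exists N. intros k hk'.
    apply le_INR in hk'. destruct (hf k) as [a _]. lra. }
  destruct (H4 _ _ _ hc K) as [N hN]. specialize (hN N (Nat.le_refl N)). destruct (hf N) as [_ b].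
  simpl in hN. lra.
Qed.

Lemma vf {n} (p q : Hn n) : exp (Rabs (snd p - snd q)) / 2 <= exp (dH p q).
Proof. pose proof (exp_dH p q) as [h _]. pose proof (Aarg_ge_l p q). pose proof (Aarg_ge_r p q).
  unfold Rabs. destruct (Rcase_abs (snd p - snd q)).
  - replace (exp (- (snd p - snd q))) with (exp (snd q) / exp (snd p)).
    2:{ replace (- (snd p - snd q)) with (snd q + - snd p) by ring. rewrite exp_plus, exp_Ropp. reflexivity. }
    pose proof (exp_pos (snd p)). replace (exp (snd q) / exp (snd p) / 2) with (exp (snd q) / (2 * exp (snd p))) by (field; lra). lra.
  - replace (exp (snd p - snd q)) with (exp (snd p) / exp (snd q)).
    2:{ unfold Rminus. rewrite exp_plus, exp_Ropp. reflexivity. }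
    pose proof (exp_pos (snd q)). replace (exp (snd p) / exp (snd q) / 2) with (exp (snd p) / (2 * exp (snd q))) by (field; lra). lra.
Qed.

Lemma farK K s : Rabs K + 1 <= s -> exp s / 2 <= exp K -> False.
Proof. intros hs h. assert (exp (K + 1) <= exp s) by (apply exp_le_m; pose proof (Rle_abs K); lra).
  rewrite exp_plus in H. pose proof (exp_ineq1 1). pose proof (exp_pos K). nra. Qed.

Lemma exp_le_1 u : 0 <= u -> exp (-u) <= 1.
Proof. intro. rewrite <- exp_0. apply exp_le_m. lra. Qed.

Lemma tri_height {n} (x x' : Rn (n-1)) (sigma : R -> Hn n) : x <> x' ->
  ideal_triangle (@dH n) (eta x) (eta x') sigma -> forall s0, tcoord (sigma s0) <= ln (euc x x') + 2.
Proof.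
  intros hne [_ [_ [gs [h1 [h2 [h3 [o1 [o2 [o3 [A1 [A2 A3]]]]]]]]]]] s0.
  assert (hD : 0 < sq x x') by (apply sq_pos; auto).
  destruct o1 as [-> | ->]; destruct o2 as [-> | ->].
  - exfalso. destruct A1 as [K [c _]]. 
    destruct (c (Rabs K + 1)) as [u [hu hd]]. pose proof (Rabs_pos K); lra.
    pose proof (vf (eta x (Rabs K + 1)) (rev (eta x') u)). simpl in H.
    apply (farK K (Rabs (Rabs K + 1 - - u))). rewrite (Rabs_pos_eq (Rabs K + 1 - - u)); pose proof (Rabs_pos K); lra.
    eapply Rle_trans; [exact H|]. apply exp_le_m; auto.
  -
    destruct A3 as [K3 [c3 _]]. destruct A2 as [K2 [_ c2]].
    assert (E2 : forall s, 0 <= s -> exists u, 0 <= u /\ dH (h3 (-s)) (x', -u) <= K2).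
    { intros s hs. destruct (c2 s hs) as [u [hu hd]]. exists u. split; auto. rewrite dH_sym. exact hd. }
    destruct o3 as [-> | ->].
    + apply (height_bound sigma x x' K3 K2 gs c3 E2 hne s0).
    + pose proof (height_bound (rev sigma) x x' K3 K2 (geodesic_rev sigma gs) c3 E2 hne (- s0)).
      unfold rev in H. rewrite Ropp_involutive in H. exact H.
  - exfalso. destruct A1 as [K [c _]].
    set (s := Rabs (ln (2 * exp K / sq x x')) + 1).
    destruct (c s) as [u [hu hd]]. unfold s; pose proof (Rabs_pos (ln (2 * exp K / sq x x'))); lra.
    pose proof (exp_dH (rev (eta x) s) (rev (eta x') u)) as [e1 _].
    pose proof (Aarg_ge_sq (rev (eta x) s) (rev (eta x') u)) as e2. simpl in e2.
    assert (exp (dH (rev (eta x) s) (rev (eta x') u)) <= exp K) by (apply exp_le_m; auto).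
    set (a := exp (-s)) in *. set (b := exp (-u)) in *.
    assert (ha : 0 < a) by apply exp_pos. assert (hb : 0 < b) by apply exp_pos.
    assert (hb1 : b <= 1) by (apply exp_le_1; auto).
    assert (h : sq x x' / (2*a*b) <= exp K) by lra.
    assert (sq x x' <= exp K * (2*a*b)).
    { apply (Rmult_le_compat_r (2*a*b)) in h. 2: nra.
      replace (sq x x' / (2 * a * b) * (2 * a * b)) with (sq x x') in h by (field; lra). lra. }
    assert (hs : exp (ln (2 * exp K / sq x x')) < exp s).
    { apply exp_increasing. unfold s. pose proof (Rle_abs (ln (2 * exp K / sq x x'))). lra. }
    rewrite exp_ln in hs. 2: { pose proof (exp_pos K). apply Rdiv_lt_0_compat; lra. }
    assert (hae : a * exp s = 1). { unfold a. rewrite exp_Ropp. field. pose proof (exp_pos s); lra. }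
    pose proof (exp_pos K).
    assert (2 * exp K < sq x x' * exp s).
    { apply (Rmult_lt_compat_l (sq x x')) in hs; auto.
      replace (sq x x' * (2 * exp K / sq x x')) with (2 * exp K) in hs by (field; lra). lra. }
    assert (sq x x' * exp s <= exp K * (2*a*b) * exp s) by (apply Rmult_le_compat_r; [left; apply exp_pos| auto]).
    assert (exp K * (2*a*b) * exp s = 2 * exp K * b) by (replace (exp K * (2*a*b) * exp s) with (2*exp K*b*(a*exp s)) by ring; rewrite hae; ring).
    nra.
  - exfalso. destruct A1 as [K [c _]].
    destruct (c (Rabs K + 1)) as [u [hu hd]]. pose proof (Rabs_pos K); lra.
    pose proof (vf (rev (eta x) (Rabs K + 1)) (rev (rev (eta x')) u)). simpl in H.
    apply (farK K (Rabs (- (Rabs K + 1) - - - u))). rewrite (Rabs_left1 (- (Rabs K + 1) - - - u)); pose proof (Rabs_pos K); lra.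
    eapply Rle_trans; [exact H|]. apply exp_le_m; auto.
Qed.

Lemma closed_lemma {X : Type} (d : X -> X -> R) (Hmet : is_metric d) (Fx : R -> X) (g : R -> X) (Dl h : R) :
  (forall s u, d (Fx s) (Fx u) = Rabs (s - u)) ->
  (forall e, 0 < e -> exists t, dist_img_le d (Fx t) g Dl /\ Rabs (t - h) < e) ->
  dist_img_le d (Fx h) g Dl.
Proof. intros hg hc eta heta. destruct (hc (eta/2)) as [t [ht hth]]. lra.
  destruct (ht (eta/2)) as [u hu]. lra. exists u.
  destruct Hmet as [_ [_ [hsym htr]]]. pose proof (htr (Fx h) (Fx t) (g u)).
  rewrite hg in H. rewrite <- Rabs_Ropp in H. replace (- (h - t)) with (t - h) in H by ring. lra. Qed.

Lemma key_bound {n} {X : Type} (d : X -> X -> R) (F : Hn n -> X) (Hmet : is_metric d)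
  (eps Rc : R) (Heps : 0 < eps)
  (H1 : forall x : Rn (n - 1), geodesic d (fun t => F (eta x t)))
  (H3 : forall (x x' : Rn (n - 1)) (t : R),
          exp (- t) * euc x x' < eps -> d (F (x, t)) (F (x', t)) <= Rc)
  (y y' : Rn (n-1)) (t u Dl : R) : 0 < euc y y' ->
  d (F (y,t)) (F (y',u)) < Dl + 1 -> d (F (y,t)) (F (y',t)) < 2 * Dl + Rc + 2.
Proof. intros hE hd.
  destruct Hmet as [hpos [_ [hsym htr]]].
  set (s := Rmax (Rmax t u) (ln (euc y y') - ln eps + 1)).
  assert (st : t <= s) by (unfold s; eapply Rle_trans; [apply Rmax_l|apply Rmax_l]).
  assert (su : u <= s) by (unfold s; eapply Rle_trans; [apply Rmax_r|apply Rmax_l]).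
  assert (sl : ln (euc y y') - ln eps + 1 <= s) by apply Rmax_r.
  assert (hs : d (F (y,s)) (F (y',s)) <= Rc).
  { apply H3. replace (exp (-s) * euc y y') with (exp (-s + ln (euc y y'))).
    2: { rewrite exp_plus, exp_ln; auto. }
    rewrite <- (exp_ln eps) by auto. apply exp_increasing. lra. }
  pose proof (H1 y t s) as g1. pose proof (H1 y' u s) as g2. pose proof (H1 y' u t) as g3. simpl in g1, g2, g3.
  rewrite Rabs_left1 in g1 by lra. rewrite Rabs_left1 in g2 by lra.
  pose proof (htr (F (y,t)) (F (y',u)) (F (y',s))). pose proof (htr (F (y,t)) (F (y',s)) (F (y,s))).
  pose proof (htr (F (y',u)) (F (y,t)) (F (y,s))). pose proof (htr (F (y',u)) (F (y,s)) (F (y',s))).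
  pose proof (htr (F (y,t)) (F (y',u)) (F (y',t))).
  rewrite (hsym (F (y',s)) (F (y,s))) in *. rewrite (hsym (F (y',u)) (F (y,t))) in *.
  unfold eta in *. rewrite g3 in *.
  assert (Rabs (u - t) < Dl + 1 + Rc).
  { unfold Rabs. destruct (Rcase_abs (u - t)); lra. }
  lra.
Qed.

Theorem claim2p4 (n : nat) (X : Type) (d : X -> X -> R) (F : Hn n -> X)
  (delta eps Rc : R)
  (Hmet : is_metric d) (Hgeo : geodesic_space d)
  (Hdelta : 0 < delta) (Heps : 0 < eps) (HRc : 0 < Rc)
  (H1 : forall x : Rn (n - 1), geodesic d (fun t => F (eta x t)))
  (H2 : forall x x' : Rn (n - 1), x <> x' ->
          exists g : R -> X,
            slim_ideal_triangle d delta (fun t => F (eta x t)) (fun t => F (eta x' t)) g)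
  (H3 : forall (x x' : Rn (n - 1)) (t : R),
          exp (- t) * euc x x' < eps -> d (F (x, t)) (F (x', t)) <= Rc)
  (H4 : forall (xk xk' : nat -> Rn (n - 1)) (tk : nat -> R),
          cv_infty (fun k => exp (- tk k) * euc (xk k) (xk' k)) ->
          cv_infty (fun k => d (F (xk k, tk k)) (F (xk' k, tk k)))) :
  exists C0 : R,
    forall (x x' : Rn (n - 1)) (sigma : R -> Hn n),
      x <> x' ->
      ideal_triangle (@dH n) (eta x) (eta x') sigma ->
      forall s0 : R, (forall s, tcoord (sigma s) <= tcoord (sigma s0)) ->
      exists hT : R,
        is_min (height_set d F delta eps Rc x x') hT /\
        tcoord (sigma s0) - hT <= C0.
Proof.
  set (Dl := Defs.Delta delta eps Rc).
  assert (hDl : Rc <= Dl).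
  { unfold Dl, Defs.Delta. eapply Rle_trans; [|apply Rmax_r].
    assert (0 < 2 * Rc / eps) by (apply Rdiv_lt_0_compat; lra). lra. }
  destruct (unif d F H4 (2 * Dl + Rc + 2)) as [M [hM hunif]].
  exists (ln M + 2).
  intros x x' sigma hne htri s0 _.
  assert (hE : 0 < euc x x') by (apply sqrt_lt_R0; apply sq_pos; auto).
  assert (hE' : 0 < euc x' x) by (apply sqrt_lt_R0; apply sq_pos; auto).
  assert (esym : euc x' x = euc x x') by (unfold euc; fold (sq x' x); fold (sq x x'); rewrite sq_sym; auto).
  set (S := height_set d F delta eps Rc x x').
  assert (pair_lb : forall y y' t, 0 < euc y y' -> dist_img_le d (F (y, t)) (fun u => F (y', u)) Dl ->
      ln (euc y y') - ln M <= t).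
  { intros y y' t hy hdi. destruct (hdi 1) as [u hu]. lra.
    pose proof (key_bound d F Hmet eps Rc Heps H1 H3 y y' t u Dl hy hu).
    destruct (Rle_lt_dec (exp (-t) * euc y y') M) as [hl|hl].
    2: { apply hunif in hl. lra. }
    assert (exp (ln (euc y y') - t) <= exp (ln M + t - t)).
    { replace (ln M + t - t) with (ln M) by ring. rewrite exp_ln by auto.
      unfold Rminus. rewrite exp_plus, exp_ln by auto. lra. }
    apply exp_le_inv in H0. lra. }
  assert (LB : forall t, S t -> ln (euc x x') - ln M <= t).
  { intros t [h|h]. apply (pair_lb x x' t hE h). rewrite <- esym. apply (pair_lb x' x t hE' h). }
  set (t1 := ln (euc x x') - ln eps + 1).
  assert (NE : S t1).
  { left. intros e he. exists t1. 
    assert (d (F (x,t1)) (F (x',t1)) <= Rc).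
    { apply H3. replace (exp (-t1) * euc x x') with (exp (-t1 + ln (euc x x'))).
      2: { rewrite exp_plus, exp_ln; auto. }
      rewrite <- (exp_ln eps) by auto. apply exp_increasing. unfold t1. lra. }
    unfold Dl in hDl. lra. }
  set (E := fun z => S (- z)).
  assert (hb : bound E).
  { exists (ln M - ln (euc x x')). intros z hz. apply LB in hz. lra. }
  assert (hne2 : exists z, E z) by (exists (- t1); unfold E; rewrite Ropp_involutive; auto).
  destruct (completeness E hb hne2) as [m [hub hlub]].
  set (h := - m).
  assert (hle : forall t, S t -> h <= t).
  { intros t ht. assert (E (- t)) by (unfold E; rewrite Ropp_involutive; auto).
    apply hub in H. unfold h. lra. }
  assert (hclose : forall e, 0 < e -> exists t, S t /\ Rabs (t - h) < e).
  { intros e he. apply NNPP; intro hn.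
    assert (is_upper_bound E (m - e)).
    { intros z hz. apply Rnot_lt_le. intro hlt. apply hn. exists (- z). split. exact hz.
      assert (h <= - z) by (apply hle; exact hz). rewrite Rabs_pos_eq by lra. unfold h. lra. }
    apply hlub in H. lra. }
  assert (Sh : S h).
  { destruct (classic (dist_img_le d (F (x, h)) (fun u => F (x', u)) Dl)) as [ok|nok].
    - left. exact ok.
    - right.
      assert (ex1 : exists e1, 0 < e1 /\ forall t, dist_img_le d (F (x, t)) (fun u => F (x', u)) Dl -> e1 <= Rabs (t - h)).
      { apply NNPP; intro hn. apply nok.
        apply (closed_lemma d Hmet (fun t => F (x, t)) (fun u => F (x', u)) Dl h (H1 x)).
        intros e he. apply NNPP; intro hn2. apply hn. exists e. split; auto. intros t ht.
        apply Rnot_lt_le. intro hlt. apply hn2. exists t. auto. }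
      destruct ex1 as [e1 [he1 hfar]].
      apply (closed_lemma d Hmet (fun t => F (x', t)) (fun u => F (x, u)) Dl h (H1 x')).
      intros e he. destruct (hclose (Rmin e e1)) as [t [[ht|ht] hth]].
      + apply Rmin_pos; auto.
      + exfalso. apply hfar in ht. pose proof (Rmin_r e e1). lra.
      + exists t. split; auto. pose proof (Rmin_l e e1). lra. }
  exists h. split. split; auto.
  pose proof (tri_height x x' sigma hne htri s0). pose proof (LB h Sh). lra.
Qed.
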